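(* For all integers $n\geq0$, \[ \sum_{j=0}^n4^{n-j}C_jH_{n-j}=2^{2n+1}H_{n+1}-\binom{2(n+1)}{n+1}O_{n+1}. \]
   Context: $H_n=\sum_{j=1}^n\frac1j$ ($H_0=0$), $O_n=\sum_{j=1}^n\frac1{2j-1}$ ($O_0=0$), and $C_n=\frac1{n+1}\binom{2n}{n}$ is the $n$th Catalan number. *)

(* Defs.v *)
From mathcomp Require Import all_boot all_order all_algebra.
Set Implicit Arguments. Unset Strict Implicit. Unset Printing Implicit Defensive.
Import Order.TTheory GRing.Theory Num.Theory.
Local Open Scope ring_scope.

Definition harm (n : nat) : rat := \sum_(1 <= j < n.+1) (j%:R)^-1.

Definition oharm (n : nat) : rat := \sum_(1 <= j < n.+1) ((2 * j - 1)%N%:R)^-1.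

Definition catalan (n : nat) : rat := ('C(2 * n, n))%:R / (n.+1)%:R.

(* Main.v *)
Require Import Defs.
From mathcomp Require Import all_boot all_order all_algebra.
From mathcomp Require Import ring lra zify.
Import GRing.Theory Num.Theory.
Local Open Scope ring_scope.

Definition Bc k : rat := ('C(2*k,k))%:R.

Lemma Bc_neq0 k : Bc k != 0.
Proof. by rewrite /Bc pnatr_eq0 -lt0n bin_gt0; lia. Qed.

Lemma BS_nat k : ('C(2*k.+1,k.+1) * k.+1 = 'C(2*k,k) * (2*(2*k+1)))%N.
Proof.
have h1 := mul_bin_diag (2*k.+1) k.
have h2 := mul_bin_down (2*k).+1 k.
have e1 : ((2 * k.+1).-1 = (2*k).+1)%N by lia.
rewrite e1 /= in h1.
have e2 : ((2 * k).+1 - k = k.+1)%N by lia.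
rewrite /= e2 in h2.
nia.
Qed.

Lemma BS k : Bc k.+1 = Bc k * (2 * (2 * k%:R + 1)) / (k%:R + 1).
Proof.
have h := BS_nat k.
have h' : Bc k.+1 * (k%:R + 1) = Bc k * (2 * (2 * k%:R + 1)).
  by rewrite /Bc natr1 -natrM h natrM natrM natrD natrM.
have hk : (k%:R + 1 : rat) != 0 by rewrite natr1 pnatr_eq0.
by rewrite -h' mulfK.
Qed.

Lemma catB j : catalan j = Bc j / (j%:R + 1).
Proof. by rewrite /catalan /Bc natr1. Qed.

Lemma harmS n : harm n.+1 = harm n + (n%:R + 1)^-1.
Proof. by rewrite /harm big_nat_recr //= natr1. Qed.

Lemma oharmS n : oharm n.+1 = oharm n + (2 * n%:R + 1)^-1.
Proof.
rewrite /oharm big_nat_recr //=.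
have -> : (2 * n.+1 - 1)%N = (2 * n).+1 by lia.
by rewrite -natr1 natrM.
Qed.

Lemma natp (k : nat) : (0 : rat) <= k%:R.
Proof. exact: ler0n. Qed.

Ltac nz := apply: lt0r_neq0; repeat match goal with |- context [?k%:R] =>
  is_var k; have := natp k; move: k%:R => ? ? end; lra.

Lemma catS j : catalan j.+1 = catalan j * (2*(2*j%:R+1)) / (j%:R + 2).
Proof.
have e : (j.+1%:R : rat) = j%:R + 1 by rewrite natr1.
rewrite !catB BS e.
have h1 : (j%:R + 1 : rat) != 0 by nz.
have h2 : (j%:R + 2 : rat) != 0 by nz.
have -> : (j%:R + 1 + 1 : rat) = j%:R + 2 by ring.
field. by rewrite h1 h2.
Qed.

Definition f n j : rat := 4%:R ^+ (n.+1 - j) * catalan j / (n.+1 - j)%:R.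
Definition T n : rat := \sum_(0 <= j < n.+1) f n j.
Definition g n j : rat := - (2 * (j%:R + 1)) * f n.+1 j.

Lemma natS (k : nat) : (k.+1%:R : rat) = k%:R + 1.
Proof. by rewrite natr1. Qed.

Lemma tel_pt n j : (j < n.+1)%N ->
  (2 * n%:R + 6) * f n.+1 j - 4 * (2 * n%:R + 3) * f n j = g n j.+1 - g n j.
Proof.
move=> hj.
have [k ->] : exists k, n = (j + k)%N by exists (n - j)%N; lia.
rewrite /g /f.
have -> : ((j + k).+2 - j = k.+2)%N by lia.
have -> : ((j + k).+1 - j = k.+1)%N by lia.
have -> : ((j + k).+2 - j.+1 = k.+1)%N by lia.
rewrite catS !exprS !natS natrD.
have h1 : (k%:R + 1 : rat) != 0 by nz.
have h2 : (k%:R + 1 + 1 : rat) != 0 by nz.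
have h3 : (j%:R + 2 : rat) != 0 by nz.
field. by rewrite h1 h2 h3.
Qed.

Lemma cat0 : catalan 0 = 1.
Proof. by rewrite /catalan muln0 bin0 divr1. Qed.

Lemma Trec n : (2 * n%:R + 6) * T n.+1 =
  4 * (2 * n%:R + 3) * T n + 8 * catalan n.+1 + 2 * 4%:R ^+ n.+2 / (n%:R + 2).
Proof.
have tel : \sum_(0 <= j < n.+1)
   ((2 * n%:R + 6) * f n.+1 j - 4 * (2 * n%:R + 3) * f n j) = g n n.+1 - g n 0.
  by apply: telescope_sumr_eq => // k /andP [_ hk]; apply: tel_pt.
rewrite sumrB -!mulr_sumr in tel.
rewrite /T (big_nat_recr n.+1) //= mulrDr.
move: tel; rewrite /g /f subSnn subn0 cat0 (natS n.+1) (natS n).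
set X := \sum_(0 <= j < n.+1) _.
set Y := \sum_(0 <= j < n.+1) _.
have h2 : (n%:R + 1 + 1 : rat) != 0 by nz.
move=> tel.
have eq : (2 * n%:R + 6) * X = (2 * n%:R + 6) * X - 4 * (2 * n%:R + 3) * Y + 4 * (2 * n%:R + 3) * Y by ring.
rewrite eq tel.
have -> : (n%:R + 2 : rat) = n%:R + 1 + 1 by ring.
field. by rewrite h2.
Qed.

Lemma Tclosed n : T n = 8 * 4%:R ^+ n / (n%:R + 2) - Bc n.+2 / (2 * n%:R + 3)
   + 2 * catalan n.+1 * oharm n.+1.
Proof.
elim: n => [|n IH].
  rewrite /T /f /Bc /oharm /catalan !big_nat1.
  have -> : 'C(2 * 2, 2) = 6%N by [].
  have -> : 'C(2 * 1, 1) = 2%N by [].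
  rewrite /= subn0 bin0 expr0 expr1. have -> : (2 * 1 - 1)%N = 1%N by []. by field.
have h6 : (2 * n%:R + 6 : rat) != 0 by nz.
apply: (mulfI h6); rewrite Trec IH.
rewrite (oharmS n.+1) (catS n.+1) (catB n.+1) (BS n.+2) (BS n.+1) !exprS !natS.
have h1 : (n%:R + 1 : rat) != 0 by nz.
have h2 : (n%:R + 1 + 1 : rat) != 0 by nz.
have h3 : (n%:R + 1 + 1 + 1: rat) != 0 by nz.
have h4 : (2 * (n%:R + 1) + 1 : rat) != 0 by nz.
have h5 : (2 * n%:R + 3 : rat) != 0 by nz.
have h7 : (n%:R + 2 : rat) != 0 by nz.
have h8 : (n%:R + 1 + 2 : rat) != 0 by nz.
have h9 : (2 * (n%:R + 1) + 3 : rat) != 0 by nz.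
field. by rewrite ?h1 ?h2 ?h3 ?h4 ?h5 ?h6 ?h7 ?h8 ?h9.
Qed.

Definition S n : rat := \sum_(0 <= j < n.+1) (4%:R ^+ (n - j) * catalan j * harm (n - j)).

Lemma Srec n : S n.+1 = 4 * S n + T n.
Proof.
have H0 : harm 0 = 0 by rewrite /harm big_geq.
rewrite /S /T (big_nat_recr n.+1) //= subnn H0 mulr0 addr0.
rewrite mulr_sumr -big_split /=. apply: eq_big_nat => j /andP[_ hj].
rewrite /f subSn; last lia.
rewrite -/(harm _) harmS.
move: (n - j)%N => k.
rewrite exprS natS.
have h1 : (k%:R + 1 : rat) != 0 by nz.
field. by nz.
Qed.

Lemma pow24 k : (2%:R : rat) ^+ (2 * k + 1) = 2 * 4%:R ^+ k.
Proof.
rewrite exprD expr1 exprM mulrC.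
have -> : (2%:R : rat) ^+ 2 = 4%:R by rewrite expr2 -natrM.
by [].
Qed.

Theorem corollary2 (n : nat) :
  \sum_(0 <= j < n.+1) (4%:R ^+ (n - j) * catalan j * harm (n - j) : rat)
  = 2%:R ^+ (2 * n + 1) * harm n.+1 - ('C(2 * n.+1, n.+1))%:R * oharm n.+1.
Proof.
rewrite -/(S n).
elim: n => [|n IH].
  rewrite /S /harm /oharm /catalan !big_nat1 big_geq //.
rewrite Srec IH Tclosed !pow24.
rewrite -[('C(2 * n.+2, n.+2))%:R]/(Bc n.+2) -[('C(2 * n.+1, n.+1))%:R]/(Bc n.+1).
rewrite (harmS n.+1) (oharmS n.+1) (catB n.+1) (BS n.+1) !exprS !natS.
have h1 : (n%:R + 1 : rat) != 0 by nz.
have h2 : (n%:R + 1 + 1 : rat) != 0 by nz.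
have h4 : (2 * (n%:R + 1) + 1 : rat) != 0 by nz.
have h5 : (2 * n%:R + 3 : rat) != 0 by nz.
have h7 : (n%:R + 2 : rat) != 0 by nz.
field. by rewrite ?h1 ?h2 ?h4 ?h5 ?h7.
Qed.
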